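(* Let $f:2^V\to\mathbb{R}_+$ be a nonnegative, normalized ($f(\emptyset)=0$) supermodular function that is $r$-decomposable, and let $k$ be an integer with $r<k\le n-1$. Run greedy peeling: $S_n\gets V$; for $i=n,\dots,k+1$, choose $v_i\in\arg\min_{v\in S_i}f(v\mid S_i\setminus\{v\})$ and set $S_{i-1}\gets S_i\setminus\{v_i\}$. Then for all integers $i,j$ with $k\le i\le j\le n$, $$f(S_i)\ \ge\ \frac{\binom{i}{r}}{\binom{j}{r}}\,f(S_j)\ \ge\ \frac{r!}{r^r}\cdot\frac{i^r}{j^r}\,f(S_j).$$
   Context: $V$ is a finite set with $n=|V|$; $f(v\mid S)=f(S\cup\{v\})-f(S)$. Supermodular: $f(A)+f(B)\le f(A\cup B)+f(A\cap B)$ for all $A,B\subseteq V$. $f$ is $r$-decomposable if there exist subsets $V_1,\dots,V_m\subseteq V$ with $|V_i|\le r$ and nonnegative supermodular $f_i:2^{V_i}\to\mathbb{R}_+$ with $f(S)=\sum_i f_i(S\cap V_i)$ for all $S\subseteq V$. *)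

(* Defs.v *)
From HB Require Import structures.
From mathcomp Require Import all_boot all_order all_algebra.
Set Implicit Arguments. Unset Strict Implicit. Unset Printing Implicit Defensive.
Import Order.TTheory GRing.Theory Num.Theory.
Local Open Scope ring_scope.

Definition marg (R : numDomainType) (V : finType) (f : {set V} -> R)
  (v : V) (S : {set V}) : R := f (v |: S) - f S.

Definition supermodular (R : numDomainType) (V : finType) (f : {set V} -> R) :=
  forall A B : {set V}, f A + f B <= f (A :|: B) + f (A :&: B).

Definition supermodular_on (R : numDomainType) (V : finType) (W : {set V})
  (g : {set V} -> R) :=
  forall A B : {set V}, A \subset W -> B \subset W ->
    g A + g B <= g (A :|: B) + g (A :&: B).

(* r-decomposable: f(S) = sum_i f_i (S ∩ V_i), |V_i| <= r, each f_i : 2^{V_i} -> R_+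
   nonnegative and supermodular.  f_i is represented as a function on {set V}
   of which only the values on subsets of V_i matter. *)
Definition decomposable (R : numDomainType) (V : finType) (r : nat)
  (f : {set V} -> R) :=
  exists (m : nat) (Vs : 'I_m -> {set V}) (fs : 'I_m -> {set V} -> R),
    [/\ forall i, (#|Vs i| <= r)%N,
        forall i (A : {set V}), A \subset Vs i -> 0 <= fs i A,
        forall i, supermodular_on (Vs i) (fs i)
      & forall S : {set V}, f S = \sum_(i < m) fs i (S :&: Vs i)].

Definition greedy_peeling (R : numDomainType) (V : finType) (f : {set V} -> R)
  (k : nat) (S : nat -> {set V}) :=
  S #|V| = [set: V] /\
  forall i : nat, (k < i <= #|V|)%N ->
    exists2 v, v \in S i &
      (forall u, u \in S i -> marg f v (S i :\ v) <= marg f u (S i :\ u)) /\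
      S i.-1 = S i :\ v.

(* Main.v *)
Require Import Defs.
From HB Require Import structures.
From mathcomp Require Import all_boot all_order all_algebra.
From mathcomp Require Import lra zify.
Import Order.TTheory GRing.Theory Num.Theory.
Local Open Scope ring_scope.

Lemma ffact_le_exp (j m : nat) : (j ^_ m <= j ^ m)%N.
Proof.
elim: m => [|m IH]; first by rewrite ffactn0 expn0.
rewrite ffactnSr expnS mulnC leq_mul //; lia.
Qed.

Lemma ffact_cmp (i r m : nat) : (r <= i)%N -> (i ^ m * r ^_ m <= r ^ m * i ^_ m)%N.
Proof.
move=> ri; elim: m => [|m IH]; first by rewrite !ffactn0 !expn0.
rewrite !ffactnSr !expnSr.
have H : (i * (r - m) <= r * (i - m))%N.
  case: (leqP r m) => h; first by rewrite (_ : r - m = 0)%N ?muln0 //; lia.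
  nia.
have := leq_mul IH H.
by rewrite -!mulnA [(i * (r ^_ m * _))%N]mulnCA [(r * (i ^_ m * _))%N]mulnCA.
Qed.
Lemma sum_marg_le (R : realFieldType) (V : finType) (f : {set V} -> R) (r : nat) (A : {set V}) :
  decomposable r f ->
  \sum_(u in A) marg f u (A :\ u) <= f A *+ r.
Proof.
case=> m [Vs [fs [Hc Hn Hs Hf]]].
have E u : u \in A -> marg f u (A :\ u) = \sum_(t < m) (fs t (A :&: Vs t) - fs t ((A :\ u) :&: Vs t)).
  move=> uA; rewrite /marg setD1K // !Hf -sumrB //.
rewrite (eq_bigr _ E) exchange_big /= Hf -sumrMnl; apply: ler_sum => t _.
set g := fs t (A :&: Vs t).
have g0 : 0 <= g by apply: Hn; apply: subsetIr.
apply: le_trans (_ : \sum_(u in A) (if u \in A :&: Vs t then g else 0) <= _).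
  apply: ler_sum => u uA; case: ifP => uV.
    rewrite lerBlDr lerDl; apply: Hn; apply: subsetIr.
  rewrite (_ : (A :\ u) :&: Vs t = A :&: Vs t) ?subrr //.
  apply/setP => x; rewrite !inE; case: (eqVneq x u) => // ->.
  by move: uV; rewrite inE uA /= => ->.

rewrite -big_mkcondr /=.
have -> : \sum_(u in A | u \in A :&: Vs t) g = \sum_(u in A :&: Vs t) g.
  by apply: eq_bigl => u; rewrite inE; case: (u \in A).
rewrite sumr_const.
apply: (ler_wpMn2l g0).
apply: leq_trans (Hc t); apply: subset_leq_card; apply: subsetIr.
Qed.

Lemma card_peel (R : realFieldType) (V : finType) (f : {set V} -> R) (k : nat) (S : nat -> {set V}) :
  greedy_peeling f k S -> forall i, (k <= i <= #|V|)%N -> #|S i| = i.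
Proof.
case=> HV Hg.
suff H : forall d, (d <= #|V| - k)%N -> #|S (#|V| - d)%N| = (#|V| - d)%N.
  move=> i /andP [ki iV].
  have := H (#|V| - i)%N; rewrite (_ : (#|V| - (#|V| - i))%N = i); last by lia.
  by apply; lia.
elim=> [|d IH] hd; first by rewrite subn0 HV cardsT.
have hi : (k < #|V| - d <= #|V|)%N by apply/andP; split; lia.
have [v vS [_ E]] := Hg _ hi.
rewrite (_ : (#|V| - d.+1)%N = (#|V| - d).-1); last by lia.
rewrite E; have := cardsD1 v (S (#|V| - d)%N); rewrite vS IH; last by lia.
move=> h; lia.
Qed.

Lemma step (R : realFieldType) (V : finType) (f : {set V} -> R)
  (r k : nat) (S : nat -> {set V}) :
  decomposable r f -> (r < k)%N -> greedy_peeling f k S ->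
  forall j, (k <= j)%N -> (j < #|V|)%N ->
  ('C(j, r)%:R / 'C(j.+1, r)%:R) * f (S j.+1) <= f (S j).
Proof.
move=> Hd rk HG j kj jV.
have hi : (k < j.+1 <= #|V|)%N by apply/andP; split; lia.
have hc : #|S j.+1| = j.+1 by apply: (@card_peel R V f k S HG); lia.
case: HG => _ Hg.
have [v vS [Hmin E]] := Hg _ hi.
rewrite /= in E; rewrite E.
have Hf : f (S j.+1 :\ v) = f (S j.+1) - marg f v (S j.+1 :\ v).
  by rewrite /marg setD1K // opprB addrC subrK.
rewrite Hf.
set F := f (S j.+1); set m := marg f v (S j.+1 :\ v).
have H1 : m *+ j.+1 <= F *+ r.
  apply: le_trans (@sum_marg_le R V f r (S j.+1) Hd).
  have -> : m *+ j.+1 = \sum_(u in S j.+1) m by rewrite sumr_const hc.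
  apply: ler_sum => u uS; exact: Hmin.
have H2 : (j.+1 * 'C(j, r) = (j.+1 - r) * 'C(j.+1, r))%N by rewrite -mul_bin_down.
have d0 : (0 < 'C(j.+1, r))%N by rewrite bin_gt0; lia.
set c := 'C(j, r) in H2 *; set d := 'C(j.+1, r) in H2 d0 *.
have H2' : (j.+1%:R : R) * c%:R = (j.+1%:R - r%:R) * d%:R.
  by rewrite -natrM H2 natrM natrB //; lia.
have d0' : (0 : R) < d%:R by rewrite ltr0n.
rewrite -(mulr_natl m) -(mulr_natl F) in H1.
rewrite mulrAC ler_pdivrMr //.
have J0 : (0 : R) < j.+1%:R by rewrite ltr0n.
rewrite -(ler_pM2l J0) mulrA H2'.
nra.
Qed.

Lemma tele (R : realFieldType) (V : finType) (f : {set V} -> R)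
  (r k : nat) (S : nat -> {set V}) :
  (forall A : {set V}, 0 <= f A) ->
  decomposable r f -> (r < k)%N -> greedy_peeling f k S ->
  forall i d, (k <= i)%N -> (i + d <= #|V|)%N ->
  ('C(i, r)%:R / 'C(i + d, r)%:R) * f (S (i + d)%N) <= f (S i).
Proof.
move=> f0 Hd rk HG i d ki.
elim: d => [|d IH] hd.
  rewrite addn0 divff ?mul1r // pnatr_eq0 -lt0n bin_gt0; lia.
have hC : ('C(i + d, r)%:R : R) != 0 by rewrite pnatr_eq0 -lt0n bin_gt0; lia.
apply: le_trans (IH _); last by lia.
rewrite addnS -[X in X <= _](_ : 'C(i, r)%:R / 'C(i + d, r)%:R * ('C(i + d, r)%:R / 'C((i + d).+1, r)%:R * f (S (i + d).+1)) = _); last first.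
  by rewrite !mulrA divfK.
apply: ler_wpM2l; first by rewrite mulr_ge0 ?invr_ge0 ?ler0n.
apply: (@step R V f r k S Hd rk HG); lia.
Qed.

Lemma coef_ineq (R : realFieldType) (r i j : nat) : (r < i)%N -> (i <= j)%N ->
  (r`!%:R / r%:R ^+ r) * (i%:R ^+ r / j%:R ^+ r) <= ('C(i, r)%:R / 'C(j, r)%:R :> R).
Proof.
move=> ri ij.
have N : (r`! * i ^ r * 'C(j, r) <= 'C(i, r) * (r ^ r * j ^ r))%N.
  have a0 : (0 < r`!)%N by apply: fact_gt0.
  have h1 : (r`! * 'C(j, r) <= j ^ r)%N by rewrite mulnC bin_ffact ffact_le_exp.
  have h2 : (i ^ r * r`! <= r ^ r * ('C(i, r) * r`!))%N.
    by rewrite bin_ffact -ffactnn; apply: ffact_cmp; lia.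
  have h3 : (i ^ r <= r ^ r * 'C(i, r))%N.
    by rewrite -(leq_pmul2r a0) -mulnA.
  apply: (@leq_trans (i ^ r * j ^ r)).
    by rewrite mulnAC [X in (_ <= X)%N]mulnC; apply: leq_mul.
  by rewrite mulnA [('C(i, r) * _)%N]mulnC; apply: leq_mul.
have b0 : (0 : R) < r%:R ^+ r.
  case: r ri {N} => [|r] _; first by rewrite expr0.
  by rewrite exprn_gt0 // ltr0n.
have e0 : (0 : R) < j%:R ^+ r by rewrite exprn_gt0 // ltr0n; lia.
have c0 : (0 : R) < 'C(j, r)%:R by rewrite ltr0n bin_gt0; lia.
rewrite mulf_div ler_pdivrMr ?mulr_gt0 // mulrAC ler_pdivlMr //.
rewrite -!natrX -!natrM ler_nat.
exact: N.
Qed.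

Theorem lemma1 (R : realFieldType) (V : finType) (f : {set V} -> R)
  (r k : nat) (S : nat -> {set V}) :
  (forall A : {set V}, 0 <= f A) ->
  f set0 = 0 ->
  supermodular f ->
  decomposable r f ->
  (r < k)%N -> (k <= #|V| - 1)%N ->
  greedy_peeling f k S ->
  forall i j : nat, (k <= i)%N -> (i <= j)%N -> (j <= #|V|)%N ->
    ('C(i, r)%:R / 'C(j, r)%:R) * f (S j) <= f (S i) /\
    (r`!%:R / r%:R ^+ r) * (i%:R ^+ r / j%:R ^+ r) * f (S j)
      <= ('C(i, r)%:R / 'C(j, r)%:R) * f (S j).
Proof.
move=> f0 _ _ Hd rk _ HG i j ki ij jV.
split.
  have := @tele R V f r k S f0 Hd rk HG i (j - i)%N ki.
  rewrite subnKC //; apply; lia.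
apply: ler_wpM2r; first exact: f0.
apply: coef_ineq => //; lia.
Qed.
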